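(* Let $V$ be a finite set of variables and let $p$ be a probability distribution over $V$ faithful to an LWF chain graph $G$ with vertex set $V$, with all conditional independence queries answered correctly according to $p$. Then at the end of the skeleton recovery phase of the PC-like algorithm PC4LWF, the undirected graph $H$ has exactly the same adjacencies as $G$ (i.e. $H$ is the skeleton of $G$).
   Context: An LWF chain graph (CG) is a graph on a finite vertex set with directed ($\to$) and undirected ($-$) edges, at most one edge between two vertices, and no partially directed cycle (a cycle $v_1,\dots,v_n,v_{n+1}\equiv v_1$, $n\ge3$, of distinct vertices with each step $v_i-v_{i+1}$ or $v_i\to v_{i+1}$ and at least one step directed). Chain components are the connected components after deleting directed edges. $bd(A)$ is the set of parents or neighbours of vertices of $A$ outside $A$; $An(A)$ is the smallest set $B\supseteq A$ with $bd(b)\subseteq B$ for all $b\in B$. The moral graph $G^m$ joins $\alpha,\beta$ iff they are adjacent in $G$ or $\alpha\to\gamma_1$, $\beta\to\gamma_2$ for some $\gamma_1,\gamma_2$ in one chain component. For disjoint $A,B,S$, $S$ c-separates $A$ from $B$ if it separates them in $(G_{An(A\cup B\cup S)})^m$. $p$ is faithful to $G$ if $A\perp\!\!\!\perp B\mid S$ in $p$ iff $S$ c-separates $A$ from $B$ in $G$. Skeleton recovery of PC4LWF: let $H$ be the complete undirected graph on $V$. For $i=0,1,\dots,|V|-2$: while possible, select any ordered pair $(u,v)$ of vertices adjacent in the current $H$ with $|ad_H(u)\setminus\{v\}|\ge i$, where $ad_H(x)$ is the current set of vertices adjacent to $x$ in $H$; if there exists $S\subseteq ad_H(u)\setminus\{v\}$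 with $|S|=i$ and $u\perp\!\!\!\perp v\mid S$ in $p$, set $S_{uv}=S_{vu}=S$ and remove the edge $u-v$ from $H$. *)

(* Defs.v *)
From Stdlib Require Import Relations.
From mathcomp Require Import all_boot.

Set Implicit Arguments.
Unset Strict Implicit.
Unset Printing Implicit Defensive.

Section ChainGraphs.
Variable V : finType.

(* A mixed graph on V: [dir x y] means x -> y, [und x y] means x - y. *)
Record mgraph := MGraph { dir : rel V; und : rel V }.

Definition cyc_steps (s : seq V) : seq (V * V) := zip s (rot 1 s).

Definition pd_cycle (G : mgraph) (s : seq V) : bool :=
  [&& 3 <= size s, uniq s,
      all (fun e => und G e.1 e.2 || dir G e.1 e.2) (cyc_steps s)
    & has (fun e => dir G e.1 e.2) (cyc_steps s)].

Definition is_chain_graph (G : mgraph) : Prop :=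
  [/\ forall x, ~~ dir G x x /\ ~~ und G x x,
      forall x y, und G x y = und G y x,
      forall x y, ~~ (dir G x y && dir G y x) /\ ~~ (dir G x y && und G x y)
    & forall s, ~~ pd_cycle G s].

Definition adjacent (G : mgraph) (x y : V) : bool :=
  [|| dir G x y, dir G y x | und G x y].

Definition bd (G : mgraph) (A : {set V}) : {set V} :=
  [set x | (x \notin A) && [exists a in A, dir G x a || und G x a]].

Definition An (G : mgraph) (A : {set V}) : {set V} :=
  \bigcap_(B : {set V} | (A \subset B) && [forall b in B, bd G [set b] \subset B]) B.

(* Induced subgraph G_W (as a mixed graph on V with edges only inside W). *)
Definition induced (G : mgraph) (W : {set V}) : mgraph :=
  MGraph [rel x y | [&& x \in W, y \in W & dir G x y]]
         [rel x y | [&& x \in W, y \in W & und G x y]].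

Definition same_comp (G : mgraph) (x y : V) : bool := connect (und G) x y.

Definition moral (G : mgraph) (W : {set V}) : rel V :=
  fun a b =>
    let GW := induced G W in
    [&& a \in W, b \in W, a != b &
        adjacent GW a b ||
        [exists g1, exists g2,
           [&& dir GW a g1, dir GW b g2 & same_comp GW g1 g2]]].

Definition separates (M : rel V) (A B S : {set V}) : Prop :=
  forall a b, a \in A -> b \in B ->
    ~~ connect [rel x y | [&& M x y, x \notin S & y \notin S]] a b.

Definition c_separates (G : mgraph) (A B S : {set V}) : Prop :=
  separates (moral G (An G (A :|: B :|: S))) A B S.

(* Faithfulness of an independence model (the CI relation of p) to G. *)
Definition faithful (ci : {set V} -> {set V} -> {set V} -> Prop) (G : mgraph) :=
  forall A B S : {set V},
    [disjoint A & B] -> [disjoint A & S] -> [disjoint B & S] ->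
    (ci A B S <-> c_separates G A B S).

(* ---- Skeleton recovery of PC4LWF ----
   H is an undirected graph given by its (symmetric) set of ordered
   adjacent pairs. *)
Definition complete_ug : {set V * V} := [set e | e.1 != e.2].

Definition ad (H : {set V * V}) (x : V) : {set V} := [set y | (x, y) \in H].

Definition remove_edge (H : {set V * V}) (u v : V) : {set V * V} :=
  H :\ (u, v) :\ (v, u).

Definition pc_step (ci : {set V} -> {set V} -> {set V} -> Prop) (i : nat)
    (H H' : {set V * V}) : Prop :=
  exists u v (S : {set V}),
    [/\ (u, v) \in H, i <= #|ad H u :\ v|,
        S \subset ad H u :\ v, #|S| = i & ci [set u] [set v] S] /\
    H' = remove_edge H u v.

(* End of level i: every selectable pair has been tested and no test
   succeeds any more. *)
Definition level_done ci i H : Prop := forall H', ~ pc_step ci i H H'.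

Definition pc_level ci i (H H' : {set V * V}) : Prop :=
  clos_refl_trans _ (pc_step ci i) H H' /\ level_done ci i H'.

(* pc_after ci n H : H is a possible state after levels 0,...,n-1. *)
Fixpoint pc_after ci (n : nat) (H : {set V * V}) : Prop :=
  match n with
  | 0 => H = complete_ug
  | n'.+1 => exists H0, pc_after ci n' H0 /\ pc_level ci n' H0 H
  end.

(* Possible outputs of the skeleton recovery phase: levels i = 0..|V|-2. *)
Definition pc_skeleton_output ci (H : {set V * V}) : Prop :=
  pc_after ci (#|V| - 2).+1 H.

End ChainGraphs.

(* Main.v *)
Require Import Defs.
From mathcomp Require Import all_boot.
From Stdlib Require Import Relations.

Set Implicit Arguments. Unset Strict Implicit. Unset Printing Implicit Defensive.

Section Pf.
Variable V : finType.
Variable G : mgraph V.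
Hypothesis CG : is_chain_graph G.

Definition Rg : rel V := fun a b => dir G a b || und G a b.

Lemma zip_rcons_all (r : rel V) a p b :
  all (fun e => r e.1 e.2) (zip (a :: p) (rcons p b)) = path r a p && r (last a p) b.
Proof. elim: p a => [|c p IH] a /=; first by rewrite andbT. by rewrite IH andbA. Qed.

Lemma zip_rcons_has (d : rel V) a p b :
  d (last a p) b -> has (fun e => d e.1 e.2) (zip (a :: p) (rcons p b)).
Proof. elim: p a => [|c p IH] a /=; first by move=> ->. by move=> H; rewrite IH ?orbT. Qed.

Lemma no_semicycle u v : dir G u v -> connect Rg v u -> False.
Proof.
case: CG => loop usym asym nocyc duv /connectP [p pth lst].
case/shortenP: pth lst => p' pth' uq _ lst'.
case: p' pth' uq lst' => [|w p'] pth' uq lst'.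
  by move: lst' duv => /= -> d; case: (loop v); rewrite d.
case: p' pth' uq lst' => [|w2 p'] pth' uq lst'.
  move: lst' pth' => /= <-; rewrite /Rg andbT => /orP [] h.
    by case: (asym u v); rewrite duv h.
  by case: (asym u v); rewrite duv usym h.
apply/negP: (nocyc (v :: w :: w2 :: p')).
rewrite /pd_cycle /cyc_steps rot1_cons negbK; apply/and4P; split => //.
  have : all (fun e => Rg e.1 e.2) (zip (v :: w :: w2 :: p') (rcons (w :: w2 :: p') v)).
    by rewrite zip_rcons_all pth' -lst' /Rg duv.
  by apply: sub_all => e /=; rewrite /Rg orbC.
have := @zip_rcons_has (fun a b => dir G a b) v (w :: w2 :: p') v.
by rewrite -lst' => /(_ duv).
Qed.

Definition Db x y := [exists g, dir G x g && connect Rg g y].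

Lemma Db_antisym x y : Db x y -> Db y x -> False.
Proof.
move=> /existsP [g /andP [dxg cgy]] /existsP [h /andP [dyh chx]].
apply: (no_semicycle dxg).
apply: connect_trans cgy _; apply: connect_trans chx.
by apply: connect1; rewrite /Rg dyh.
Qed.

Lemma An_sub (A : {set V}) g : g \in An G A -> exists2 a, a \in A & connect Rg g a.
Proof.
move=> /bigcapP H.
have : g \in [set g | [exists a in A, connect Rg g a]].
  apply: H; apply/andP; split.
    by apply/subsetP => a aA; rewrite inE; apply/existsP; exists a; rewrite aA connect0.
  apply/forallP => b; apply/implyP; rewrite inE => /existsP [a /andP [aA cba]].
  apply/subsetP => z; rewrite !inE => /andP [_ /existsP [b' /andP [bb' Rzb]]].
  rewrite inE in bb'; move/eqP: bb' Rzb => -> Rzb.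
  apply/existsP; exists a; rewrite aA /=.
  by apply: connect_trans cba; apply: connect1.
by rewrite inE => /existsP [a /andP [aA c]]; exists a.
Qed.

Lemma A_sub_An (A : {set V}) : A \subset An G A.
Proof. by apply/subsetP => a aA; apply/bigcapP => B /andP [/subsetP sub _]; exact: sub. Qed.

Lemma adj_sym a b : adjacent G a b = adjacent G b a.
Proof.
case: CG => _ usym _ _.
by rewrite /adjacent (usym a b); case: (dir G a b); case: (dir G b a).
Qed.

Lemma adj_not_sep u v (S : {set V}) : u != v -> u \notin S -> v \notin S -> adjacent G u v ->
  ~ c_separates G [set u] [set v] S.
Proof.
move=> nuv uS vS adj sep.
have := sep u v (set11 u) (set11 v); apply/negP; rewrite negbK.
have sub := subsetP (A_sub_An ([set u] :|: [set v] :|: S)).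
have uW := sub u; rewrite !inE eqxx /= in uW; have {}uW := uW isT.
have vW := sub v; rewrite !inE eqxx /= orbT in vW; have {}vW := vW isT.
apply: connect1; rewrite /= uS vS !andbT /moral uW vW nuv /=.
apply/orP; left; move: adj; by rewrite /adjacent /induced /= uW vW.
Qed.

Lemma sep x y : x != y -> ~~ adjacent G x y -> ~~ Db x y ->
  c_separates G [set x] [set y] (bd G [set x]).
Proof.
case: CG => loop usym asym nocyc.
move=> nxy nadj nD a b; rewrite !inE => /eqP -> /eqP ->.
apply/negP => /connectP [p pth lst].
case: p pth lst => [|z p] /=.
  by move=> _ exy; rewrite exy eqxx in nxy.
move=> /andP [Hxz _] _; move: Hxz => /and3P [Mxz _ zS].
move: Mxz; rewrite /moral => /and4P [_ zW nxz Hor].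
set W := An G _ in zW Hor.
have [g1 dxg gW] : exists2 g1, dir G x g1 & g1 \in W.
  case/orP: Hor => [adj | /existsP [g1 /existsP [g2 /and3P [d1 _ _]]]].
    rewrite /adjacent /induced /= in adj.
    case/or3P: adj => /and3P [_ zW' h].
    - by exists z.
    - move: zS; rewrite !inE eq_sym nxz /= => /negP; case.
      by apply/existsP; exists x; rewrite inE eqxx h.
    - move: zS; rewrite !inE eq_sym nxz /= => /negP; case.
      by apply/existsP; exists x; rewrite inE eqxx usym h orbT.
  by move: d1 => /= /and3P [_ ? ?]; exists g1.
case: (An_sub gW) => c cin cg.
rewrite !in_setU !in_set1 in cin.
case/orP: cin => [/orP [] /eqP ec | cbd]; try rewrite ec in cg.
- exact: (no_semicycle dxg cg).
- by move/negP: nD; apply; apply/existsP; exists g1; rewrite dxg.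
- move: cbd; rewrite inE => /andP [_ /existsP [x' /andP [xx' Rcx]]]; rewrite inE in xx'.
  move/eqP: xx' Rcx => -> Rcx.
  by apply: (no_semicycle dxg); apply: connect_trans cg (connect1 (Rcx : Rg c x)).
Qed.

Variable ci : {set V} -> {set V} -> {set V} -> Prop.
Hypothesis FA : faithful ci G.

Definition Inv (H : {set V * V}) :=
  [/\ forall a, (a, a) \notin H, forall a b, ((a, b) \in H) = ((b, a) \in H)
    & forall a b, adjacent G a b -> (a, b) \in H].

Lemma step_inv i H H' : Inv H -> pc_step ci i H H' -> Inv H' /\ H' \subset H.
Proof.
move=> [irr sym adj] [u [v [S [[uvH _ Ssub _ ciS] ->]]]].
have nuv : u != v by apply/eqP => e; rewrite e in uvH; move: (irr v); rewrite uvH.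
have uS : u \notin S.
  by apply/negP => /(subsetP Ssub); rewrite !inE (negbTE (irr u)) andbF.
have vS : v \notin S by apply/negP => /(subsetP Ssub); rewrite !inE eqxx.
have d1 : [disjoint [set u] & [set v]] by rewrite disjoints1 inE.
have d2 : [disjoint [set u] & S] by rewrite disjoints1.
have d3 : [disjoint [set v] & S] by rewrite disjoints1.
have csep := (FA d1 d2 d3).1 ciS.
have nadj : ~~ adjacent G u v by apply/negP => a; exact: (adj_not_sep nuv uS vS a).
split; last by apply/subsetP => e; rewrite /remove_edge !inE => /andP [_ /andP [_ ->]].
split.
- by move=> a; rewrite /remove_edge !inE (negbTE (irr a)) !andbF.
- move=> a b; rewrite /remove_edge !inE sym !xpair_eqE.
  by case: (a == v); case: (b == u); case: (a == u); case: (b == v).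
- move=> a b ab; rewrite /remove_edge !inE adj // andbT.
  apply/andP; split; apply/negP => /eqP [e1 e2]; subst a b.
  + by rewrite adj_sym ab in nadj.
  + by rewrite ab in nadj.
Qed.

Lemma rt_inv i H H' : clos_refl_trans _ (pc_step ci i) H H' -> Inv H -> Inv H' /\ H' \subset H.
Proof.
elim => [x y st | x | x y z _ IH1 _ IH2] I.
- exact: (step_inv I st).
- by split.
- case: (IH1 I) => I1 s1; case: (IH2 I1) => I2 s2; split => //.
  exact: subset_trans s2 s1.
Qed.

Lemma after_inv n H : pc_after ci n H -> Inv H.
Proof.
elim: n H => [|n IH] H /=.
- move=> ->; split.
  + by move=> a; rewrite inE /= eqxx.
  + by move=> a b; rewrite !inE /= eq_sym.
  + move=> a b ab; rewrite inE /=; apply/eqP => e; subst b.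
    by case: CG => loop usym _ _; move: ab; rewrite /adjacent; case: (loop a) => /negbTE -> /negbTE ->.
- by move=> [H0 [a0 [rt _]]]; case: (rt_inv rt (IH _ a0)).
Qed.

Lemma after_sub n H : pc_after ci n H -> forall k, k < n ->
  exists Hk, pc_after ci k.+1 Hk /\ H \subset Hk.
Proof.
elim: n H => [|n IH] H //= [H0 [a0 [rt dn]]] k.
rewrite ltnS leq_eqVlt => /orP [/eqP -> | kn].
  by exists H; split => //; exists H0.
case: (IH _ a0 _ kn) => Hk [ak sk]; exists Hk; split => //.
case: (rt_inv rt (after_inv a0)) => _ s; exact: subset_trans s sk.
Qed.

Lemma removed H x y : pc_skeleton_output ci H -> x != y -> ~~ adjacent G x y -> ~~ Db x y ->
  (x, y) \notin H.
Proof.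
move=> out nxy nadj nD.
set S := bd G [set x].
have xS : x \notin S by rewrite !inE eqxx.
have yS : y \notin S.
  rewrite !inE; apply/negP => /andP [_ /existsP [x' /andP [xx' h]]].
  rewrite inE in xx'; move/eqP: xx' h => -> h.
  by move: nadj; rewrite adj_sym /adjacent; case/orP: h => -> //; rewrite !orbT.
have Ssub : S \subset [set~ x] :\ y.
  apply/subsetP => z zS; rewrite !inE; apply/andP; split.
    by apply/negP => /eqP e; move: zS; rewrite e (negbTE yS).
  by apply/negP => /eqP e; move: zS; rewrite e (negbTE xS).
have kn : #|S| < (#|V| - 2).+1.
  have := subset_leq_card Ssub.
  have := cardsD1 y [set~ x]; rewrite cardsC1 !inE eq_sym nxy /=.
  move=> e le; rewrite ltnS; apply: (leq_trans le).
  move: e; case: #|V| => [|[|m]] //= e; rewrite e add1n subn2 /=; done.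
case: (after_sub out kn) => Hk [ak sk].
apply/negP => xyH; have xyHk := subsetP sk _ xyH.
have [_ _ adjk] := after_inv ak.
case: ak => H0 [_ [_ dn]].
have Sad : S \subset ad Hk x :\ y.
  apply/subsetP => z zS; rewrite !inE.
  apply/andP; split; first by apply/negP => /eqP e; move: zS; rewrite e (negbTE yS).
  apply: adjk; move: zS; rewrite !inE => /andP [_ /existsP [x' /andP [xx' h]]].
  rewrite inE in xx'; move/eqP: xx' h => -> h.
  by rewrite adj_sym /adjacent; case/orP: h => -> //; rewrite !orbT.
apply: (dn (remove_edge Hk x y)); exists x, y, S; split => //; split => //.
- exact: subset_leq_card.
- have d1 : [disjoint [set x] & [set y]] by rewrite disjoints1 inE.
  have d2 : [disjoint [set x] & S] by rewrite disjoints1.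
  have d3 : [disjoint [set y] & S] by rewrite disjoints1.
  by apply: (FA d1 d2 d3).2; exact: sep.
Qed.

End Pf.

Theorem lemma1 (V : finType) (G : mgraph V)
    (ci : {set V} -> {set V} -> {set V} -> Prop) :
  is_chain_graph G -> faithful ci G ->
  forall H : {set V * V}, pc_skeleton_output ci H ->
  forall x y : V, ((x, y) \in H) = adjacent G x y.
Proof.
move=> CG FA H out x y.
have [irr sym adj] := after_inv CG FA out.
case Axy: (adjacent G x y); first exact: adj.
apply/negbTE; case: (eqVneq x y) => [-> | nxy]; first exact: irr.
case Dxy: (Db G x y).
- have nD : ~~ Db G y x by apply/negP => D; exact: (Db_antisym CG (Dxy : is_true _) D).
  rewrite sym; apply: (removed CG FA out) => //; first by rewrite eq_sym.
  by rewrite (adj_sym CG) Axy.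
- by apply: (removed CG FA out) => //; rewrite ?Axy ?Dxy.
Qed.
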